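(* Let $\rho$ be a combinatorial depth measure for hyperplanes in $\mathbb{R}^d$ satisfying conditions (i) and (ii) below. Then for every finite hyperplane arrangement $A$ and every $q\in\mathbb{R}^d$, $\rho(A,q)\le \mathrm{RD}(A,q)$. (i) For every arrangement $A$, every $q$ and every hyperplane $h$: $|\rho(A,q)-\rho(A\cup\{h\},q)|\le 1$. (ii) For every arrangement $A$: $\rho(A,q)=0$ whenever $q$ lies in an unbounded cell of $A$.
   Context: A hyperplane arrangement is a finite set of affine hyperplanes in $\mathbb{R}^d$. A depth measure for hyperplanes is a function $\rho$ assigning to each pair $(A,q)$ of a finite arrangement $A$ and a point $q\in\mathbb{R}^d$ a value in $\mathbb{R}_{\ge 0}$; it is combinatorial if, for each $A$, it is constant on each face of $A$ (the relatively open cells of all dimensions of the decomposition of $\mathbb{R}^d$ induced by $A$). Regression depth $\mathrm{RD}(A,q)$: the minimum, over all closed rays emanating from $q$, of the number of hyperplanes of $A$ intersected by or parallel to the ray. *)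

(* Defs.v *)
From HB Require Import structures.
From mathcomp Require Import all_boot all_order all_algebra.
From mathcomp Require Import finmap.
From mathcomp Require Import all_classical all_reals all_analysis.
Set Implicit Arguments. Unset Strict Implicit. Unset Printing Implicit Defensive.
Import Order.TTheory GRing.Theory Num.Theory.
Local Open Scope classical_set_scope.
Local Open Scope ring_scope.


Section HyperplaneDepth.
Variables (R : realType) (d : nat).

Definition pt := 'rV[R]_d.

Definition hyperplane_of (a : pt) (b : R) : set pt :=
  [set x | (x *m a^T) 0 0 = b].

Definition is_hyperplane (H : set pt) : Prop :=
  exists a b, a != 0 /\ H = hyperplane_of a b.

Definition arrangement := {fset (set pt)}.

Definition is_arrangement (A : arrangement) : Prop :=
  forall h, h \in A -> is_hyperplane h.

Definition segment (x y : pt) : set pt :=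
  [set z | exists t : R, 0 <= t <= 1 /\ z = (1 - t) *: x + t *: y].

(* x and y lie in the same face (relatively open cell) of A:
   for every h in A, both lie on h, or neither lies on h and they are
   on the same (open) side of h, i.e. the segment [x,y] avoids h. *)
Definition same_face (A : arrangement) (x y : pt) : Prop :=
  forall h, h \in A ->
    (h x /\ h y) \/ (~ h x /\ ~ h y /\ segment x y `&` h = set0).

Definition face_of (A : arrangement) (q : pt) : set pt :=
  [set x | same_face A q x].

(* q lies in an unbounded cell of A: q lies on no hyperplane of A (so its
   face is a full-dimensional cell) and that cell is unbounded *)
Definition in_unbounded_cell (A : arrangement) (q : pt) : Prop :=
  (forall h, h \in A -> ~ h q) /\ ~ bounded_set (face_of A q).

Definition ray (q v : pt) : set pt :=
  [set z | exists t : R, 0 <= t /\ z = q + t *: v].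

Definition parallel_to (h : set pt) (v : pt) : Prop :=
  forall x, h x -> h (x + v).

Definition ray_count (A : arrangement) (q v : pt) : nat :=
  (#|` [fset h in A | `[< ray q v `&` h !=set0 \/ parallel_to h v >] ]|)%fset.

Definition RD (A : arrangement) (q : pt) : R :=
  inf [set r : R | exists v : pt, v != 0 /\ r = (ray_count A q v)%:R].

Definition depth_measure (rho : arrangement -> pt -> R) : Prop :=
  forall A q, is_arrangement A -> 0 <= rho A q.

Definition combinatorial (rho : arrangement -> pt -> R) : Prop :=
  forall A x y, is_arrangement A -> same_face A x y -> rho A x = rho A y.

End HyperplaneDepth.

(* Main.v *)
Require Import Defs.
From HB Require Import structures.
From mathcomp Require Import all_boot all_order all_algebra.
From mathcomp Require Import finmap.
From mathcomp Require Import all_classical all_reals all_analysis.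
From mathcomp Require Import lra.
Import Order.TTheory GRing.Theory Num.Theory.
Local Open Scope classical_set_scope.
Local Open Scope ring_scope.

Lemma add_many (R : realType) (d : nat)
  (rho : arrangement R d -> pt R d -> R) (q : pt R d) :
  (forall (A : arrangement R d) (q : pt R d) (h : set (pt R d)),
      is_arrangement A -> is_hyperplane h ->
      `| rho A q - rho (h |` A)%fset q | <= 1) ->
  forall B : arrangement R d, is_arrangement B ->
  forall (n : nat) (S : arrangement R d), #|` S|%fset = n ->
  (forall h, h \in S -> is_hyperplane h) ->
  rho (S `|` B)%fset q <= rho B q + n%:R.
Proof.
move=> H1 B hB; elim=> [|n IH] S hS hSh.
  by rewrite (cardfs0_eq hS) fset0U addr0.
have : S != fset0%fset by rewrite -cardfs_eq0 hS.
case/fset0Pn=> x xS.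
have hc : #|` (S `\ x)|%fset = n.
  by move: hS; rewrite (cardfsD1 x S) xS add1n => -[].
have hsub : forall h, h \in (S `\ x)%fset -> is_hyperplane h.
  by move=> h; rewrite in_fsetD1 => /andP[_ /hSh].
have eS : (S `|` B)%fset = (x |` ((S `\ x) `|` B))%fset.
  by rewrite fsetUA fsetD1K.
have hA : is_arrangement ((S `\ x) `|` B)%fset.
  by move=> h; rewrite in_fsetU => /orP[/hsub|/hB].
have := H1 _ q x hA (hSh _ xS); rewrite -eS => hd.
have := IH _ hc hsub => hi.
rewrite -addn1 natrD addrA.
apply: (le_trans _ (lerD hi (lexx 1))).
rewrite -lerBlDl; apply: le_trans hd; rewrite distrC; exact: ler_norm.
Qed.

Lemma unb (R : realType) (d : nat) (B : arrangement R d) (q v : pt R d) :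
  v != 0 ->
  (forall h, h \in B -> forall z, ray q v z -> ~ h z) ->
  in_unbounded_cell B q.
Proof.
move=> v0 HB; split.
  move=> h hB; apply: (HB h hB); exists 0; split => //; by rewrite scale0r addr0.
move=> hb; case: hb => M0 [_ HM].
have /HM hM : M0 < M0 + 1 by rewrite ltrDl.
set M := M0 + 1 in hM.
have nv : 0 < `|v| by rewrite normr_gt0.
set t := (`|M| + `|q| + 1) / `|v|.
have t0 : 0 <= t by rewrite divr_ge0 // addr_ge0 // addr_ge0.
have hz : face_of B q (q + t *: v).
  move=> h hB; right; split; first by apply: (HB h hB); exists 0; rewrite scale0r addr0.
  split; first by apply: (HB h hB); exists t.
  apply/seteqP; split => // w [[s [/andP[s0 s1] ->]] hw].
  apply: (HB h hB _ _ hw); exists (s * t); split; first by rewrite mulr_ge0.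
  by rewrite scalerDr scalerA scalerBl scale1r addrA subrK.
have := hM _ hz; rewrite /= => hle.
have e1 : `|t *: v| = `|M| + `|q| + 1.
  by rewrite normrZ ger0_norm // divfK // gt_eqF.
have e2 : `|t *: v| <= `|q + t *: v| + `|q|.
  have := ler_normD (q + t *: v) (- q); rewrite normrN.
  suff -> : q + t *: v - q = t *: v by [].
  by rewrite addrAC subrr add0r.
have : `|M| + `|q| + 1 <= M + `|q| by rewrite -e1; apply: le_trans e2 _; rewrite lerD2r; exact: hle.
have := ler_norm M. lra.
Qed.

Theorem lemma3p2 (R : realType) (d : nat) (hd : (0 < d)%N)
  (rho : arrangement R d -> pt R d -> R) :
  depth_measure rho ->
  combinatorial rho ->
  (forall (A : arrangement R d) (q : pt R d) (h : set (pt R d)),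
      is_arrangement A -> is_hyperplane h ->
      `| rho A q - rho (h |` A)%fset q | <= 1) ->
  (forall (A : arrangement R d) (q : pt R d),
      is_arrangement A -> in_unbounded_cell A q -> rho A q = 0) ->
  forall (A : arrangement R d) (q : pt R d),
    is_arrangement A -> rho A q <= RD A q.
Proof.
move=> _ _ H1 H2 A q hA; rewrite /RD; apply: lb_le_inf.
  exists (ray_count A q (const_mx 1))%:R, (const_mx 1); split => //.
  apply/eqP => /matrixP/(_ 0 (Ordinal hd)); rewrite !mxE => /eqP.
  by rewrite oner_eq0.
move=> r [v [v0 ->]].
set P := fun h : set (pt R d) => `[< ray q v `&` h !=set0 \/ parallel_to h v >].
pose S := [fset h in A | P h]%fset.
pose B := [fset h in A | ~~ P h]%fset.
have eA : A = (S `|` B)%fset.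
  apply/fsetP => h; rewrite in_fsetU !inE.
  by case: (h \in A); case: (P h).
have hB : is_arrangement B by move=> h; rewrite !inE => /andP[/hA].
have hS : forall h, h \in S -> is_hyperplane h by move=> h; rewrite !inE => /andP[/hA].
have rB : rho B q = 0.
  apply: H2 => //; apply: (@unb _ _ _ _ _ v0) => h; rewrite !inE => /andP[_ nP] z rz hz.
  move: nP; rewrite /P; move/asboolPn; apply; left; by exists z.
have := @add_many _ _ _ q H1 _ hB _ _ (erefl #|` S|%fset) hS.
rewrite -eA rB add0r => h.
have -> : ray_count A q v = #|` S|%fset by [].
exact: h.
Qed.
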